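(* Let $d,n$ be positive integers, let $\mathcal D$ be a Ferrers diagram of order $n$, and suppose $\mathcal D\cap\mathcal B_{n,d-1}\neq\emptyset$, where $\mathcal B_{n,d-1}=\{d-1,\dots,n\}\times\{d-1,\dots,n\}$. Then the following are equivalent: (1) $(\mathcal D,d)$ is irreducible. (2) $(\mathcal D,d)$ is in $(a,b)$-standard form for some $a,b$, and: $\nu_0(\mathcal D,d)=\nu_{d-1}(\mathcal D,d)$; $\nu_j(\mathcal D,d)\ge\nu_0(\mathcal D,d)$ for all $j\in[d-2]$; and, only in the case $a=b=d-1$, there exists $j\in[d-2]$ with $\nu_j(\mathcal D,d)=\nu_0(\mathcal D,d)$. (3) $(\mathcal D,d)$ is in $(a,b)$-standard form for some $a,b$, and: $\sum_{i=1}^{d-2}c_i(Y)-\sum_{i=1}^{d-2}c_i(X)=(b-a)(d-1)$; for all $j\in[d-2]$, $$j(b-a+d-1-j)+\sum_{i=1}^{j}c_{d-i}(X)-\sum_{i=1}^{j}c_i(Y)\ge 0;$$ and, only in the case $a=b=d-1$, there exists $j\in[d-2]$ for which this inequality is an equality.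
   Context: $\mathbb N=\{1,2,\dots\}$, $[n]=\{1,\dots,n\}$. A Ferrers diagram is a finite $\mathcal D\subseteq\mathbb N^2$ such that $(x,y)\in\mathcal D$ implies $(i,j)\in\mathcal D$ for all $i\in[x],j\in[y]$ (first coordinate = row, second = column); order $n$ means $\mathcal D\subseteq[n]^2$. With column heights $c_i=|\mathcal D\cap(\mathbb N\times\{i\})|$, for $0\le j\le d-1$ define $\nu_j(\mathcal D,d)=\sum_{i\ge j+1}\max\{0,c_i-d+j\}$ (the number of $(x,y)\in\mathcal D$ with $x\ge d-j$, $y\ge j+1$) and $\nu_{\min}(\mathcal D,d)=\min_j\nu_j(\mathcal D,d)$. A point $P\in\mathcal D$ is removable if $\mathcal D\setminus\{P\}$ is a Ferrers diagram. For $\mathcal D'=\mathcal D\setminus\{P\}$ with $P$ removable, write $\mathcal D'\xrightarrow{d}\mathcal D$ if $\nu_{\min}(\mathcal D',d)=\nu_{\min}(\mathcal D,d)$ and $\mathcal D\xrightarrow{d}\mathcal D'$ otherwise; $(\mathcal D,d)$ is irreducible if there is no Ferrers diagram $\mathcal D'$ with $\mathcal D'\xrightarrow{d}\mathcal D$. The pair $(\mathcal D,d)$ (with $\mathcal D$ of order $n$) is in $(a,b)$-standard form, for integers $a,b\ge d-1$, if $\mathcal D\cap\mathcal B_{n,d-1}=\{d-1,\dots,a\}\times\{d-1,\dots,b\}$. In that case, for $i\in[d-2]$ set $c_i(X)=|\{y>b:(i,y)\in\mathcal D\}|$ and $c_i(Y)=|\{x>a:(x,i)\in\mathcal D\}|$,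 and by convention $c_{d-1}(X)=c_{d-1}(Y)=0$. *)

(* Defs.v *)
From mathcomp Require Import all_boot all_order all_algebra.
From mathcomp Require Import finmap.
Set Implicit Arguments. Unset Strict Implicit. Unset Printing Implicit Defensive.
Import GRing.Theory Num.Theory.
Local Open Scope fset_scope.

(* A finite subset of N^2 (first coordinate = row, second = column). *)
Definition diagram := {fset (nat * nat)}.

Definition ferrers (D : diagram) : Prop :=
  forall x y, (x, y) \in D ->
    [/\ 0 < x, 0 < y &
        forall i j, 0 < i <= x -> 0 < j <= y -> (i, j) \in D].

Definition of_order (n : nat) (D : diagram) : Prop :=
  forall x y, (x, y) \in D -> (x <= n) && (y <= n).

Definition nu (D : diagram) (d j : nat) : nat :=
  #|` [fset p in D | (d - j <= p.1) && (j.+1 <= p.2)] |.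

Definition numin (D : diagram) (d : nat) : nat :=
  \big[minn/nu D d 0]_(0 <= j < d) nu D d j.

(* D1 ->_d D2 : either D1 = D2 \ {P} (P removable from D2) with equal
   nu_min, or D2 = D1 \ {P} (P removable from D1) with different nu_min.
   (Removability of P is the Ferrers property of the smaller diagram,
   which is required of both arguments in [irreducible].) *)
Definition arrow (d : nat) (D1 D2 : diagram) : Prop :=
  (exists P, [/\ P \in D2, D1 = D2 `\ P & numin D1 d = numin D2 d]) \/
  (exists P, [/\ P \in D1, D2 = D1 `\ P & numin D2 d <> numin D1 d]).

Definition irreducible (D : diagram) (d : nat) : Prop :=
  ~ exists D' : diagram, ferrers D' /\ arrow d D' D.

Definition inB (n d x y : nat) : bool :=
  (d.-1 <= x <= n) && (d.-1 <= y <= n).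

Definition standard_form (n : nat) (D : diagram) (d a b : nat) : Prop :=
  [/\ d.-1 <= a, d.-1 <= b &
      forall x y, ((x, y) \in D) && inB n d x y = (d.-1 <= x <= a) && (d.-1 <= y <= b)].

Definition cX (D : diagram) (d b i : nat) : nat :=
  if i == d.-1 then 0 else #|` [fset p in D | (p.1 == i) && (b < p.2)] |.

Definition cY (D : diagram) (d a i : nat) : nat :=
  if i == d.-1 then 0 else #|` [fset p in D | (p.2 == i) && (a < p.1)] |.

Definition ineq3 (D : diagram) (d a b j : nat) : int :=
  (j%:Z * (b%:Z - a%:Z + d%:Z - 1 - j%:Z)
   + \sum_(1 <= i < j.+1) (cX D d b (d - i))%:Z
   - \sum_(1 <= i < j.+1) (cY D d a i)%:Z)%R.

Definition cond2 (n : nat) (D : diagram) (d : nat) : Prop :=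
  exists a b, [/\ standard_form n D d a b,
    nu D d 0 = nu D d d.-1,
    (forall j, 1 <= j <= d - 2 -> nu D d 0 <= nu D d j) &
    (a = d.-1 /\ b = d.-1 -> exists j, 1 <= j <= d - 2 /\ nu D d j = nu D d 0)].

Definition cond3 (n : nat) (D : diagram) (d : nat) : Prop :=
  exists a b, [/\ standard_form n D d a b,
    (\sum_(1 <= i < d.-1) (cY D d a i)%:Z - \sum_(1 <= i < d.-1) (cX D d b i)%:Z
       = (b%:Z - a%:Z) * (d.-1)%:Z)%R,
    (forall j, 1 <= j <= d - 2 -> (0 <= ineq3 D d a b j)%R) &
    (a = d.-1 /\ b = d.-1 -> exists j, 1 <= j <= d - 2 /\ ineq3 D d a b j = 0%R)].

(* Main.v *)
Require Import Defs.
From mathcomp Require Import all_boot all_order all_algebra finmap zify.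
Set Implicit Arguments. Unset Strict Implicit. Unset Printing Implicit Defensive.
Local Open Scope fset_scope.

Lemma card_sep (D : diagram) (P : pred (nat*nat)) :
  #|` [fset p in D | P p]| = count P (enum_fset D).
Proof.
have -> : [fset p in D | P p] = [fset p in [seq p <- enum_fset D | P p]].
  by apply/fsetP => p; rewrite !inE mem_filter andbC.
rewrite card_fseq undup_id ?size_filter //.
exact/filter_uniq/fset_uniq.
Qed.

Definition Rj (d j : nat) (p : nat * nat) := (d - j <= p.1) && (j.+1 <= p.2).

Lemma nuE (D : diagram) d j : nu D d j = count (Rj d j) (enum_fset D).
Proof. by rewrite /nu card_sep. Qed.

Lemma count_addP (T : Type) (P Q P' Q' : pred T) (s : seq T) :
  (forall x, (P x + Q x = P' x + Q' x)%N) ->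
  (count P s + count Q s = count P' s + count Q' s)%N.
Proof.
move=> H; elim: s => //= x s IH.
have := H x; lia.
Qed.

Lemma count_fsetD1 (D : diagram) (P : nat*nat) (Q : pred (nat*nat)) : P \in D ->
  count Q (enum_fset D) = (Q P + count Q (enum_fset (D `\ P)))%N.
Proof.
move=> PD.
have pe : perm_eq (enum_fset D) (P :: enum_fset (D `\ P)).
  apply: uniq_perm; first exact: fset_uniq.
    by rewrite /= fset_uniq andbT fsetD11.
  by move=> x; rewrite inE in_fsetD1; case: eqP => [->|].
by rewrite (permP pe).
Qed.

Lemma count_fsetU1 (D : diagram) (P : nat*nat) (Q : pred (nat*nat)) : P \notin D ->
  count Q (enum_fset (P |` D)) = (Q P + count Q (enum_fset D))%N.
Proof.
move=> PD.
have pe : perm_eq (enum_fset (P |` D)) (P :: enum_fset D).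
  apply: uniq_perm; first exact: fset_uniq.
    by rewrite /= fset_uniq andbT.
  by move=> x; rewrite !inE.
by rewrite (permP pe).
Qed.

Lemma count_uniq_eq (D : diagram) (Q : pred (nat*nat)) (s : seq (nat*nat)) :
  uniq s -> (forall p, (p \in D) && Q p = (p \in s)) ->
  count Q (enum_fset D) = size s.
Proof.
move=> us H; rewrite -card_sep.
have -> : [fset p in D | Q p] = [fset p in s] by apply/fsetP => p; rewrite !inE H.
by rewrite card_fseq undup_id.
Qed.

Lemma numin_le (D : diagram) d j : j < d -> numin D d <= nu D d j.
Proof.
rewrite /numin => jd.
have : j \in index_iota 0 d by rewrite mem_index_iota.
elim: (index_iota 0 d) => // i s IH.
rewrite inE big_cons => /orP [/eqP <-|js]; first exact: geq_minl.
by rewrite geq_min IH ?orbT.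
Qed.

Lemma numin_ex (D : diagram) d : 0 < d -> exists2 j, j < d & numin D d = nu D d j.
Proof.
move=> d0; rewrite /numin big_seq.
apply: (big_rec (fun x => exists2 j, j < d & x = nu D d j)); first by exists 0.
move=> i x; rewrite mem_index_iota => /andP [_ id] [j jd ->].
case: (leqP (nu D d i) (nu D d j)) => h.
  by exists i => //; rewrite (minn_idPl h).
by exists j => //; rewrite (minn_idPr (ltnW h)).
Qed.

Lemma numin_ge (D : diagram) d m : 0 < d -> (forall j, j < d -> m <= nu D d j) -> m <= numin D d.
Proof.
move=> d0 H; have [j jd ->] := numin_ex D d0; exact: H.
Qed.

Lemma nu_rem (D : diagram) d j (P : nat*nat) : P \in D -> nu D d j = (Rj d j P + nu (D `\ P) d j)%N.
Proof. by move=> PD; rewrite !nuE (count_fsetD1 _ PD). Qed.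

Lemma nu_add (D : diagram) d j (P : nat*nat) : P \notin D -> nu (P |` D) d j = (Rj d j P + nu D d j)%N.
Proof. by move=> PD; rewrite !nuE (count_fsetU1 _ PD). Qed.

Lemma numin_rem_same (D : diagram) d (P : nat*nat) : 0 < d -> P \in D ->
  (forall j, j < d -> nu D d j = numin D d -> ~~ Rj d j P) ->
  numin (D `\ P) d = numin D d.
Proof.
move=> d0 PD H; apply/eqP; rewrite eqn_leq; apply/andP; split.
  have [j jd e] := numin_ex D d0.
  apply: (leq_trans (numin_le _ jd)).
  have R := H j jd (esym e); have := nu_rem d j PD; rewrite (negbTE R) /=; lia.
apply: numin_ge => // j jd.
have := nu_rem d j PD; have := H j jd; have := numin_le D jd.
case: (Rj d j P) => /=; last by move=> a _ c; rewrite c add0n in a.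
move=> le h e'; case: (nu D d j =P numin D d) => [/h //|ne]; lia.
Qed.

Lemma numin_rem_drop (D : diagram) d (P : nat*nat) j : P \in D -> j < d ->
  nu D d j = numin D d -> Rj d j P -> numin (D `\ P) d <> numin D d.
Proof.
move=> PD jd e R.
have := numin_le (D `\ P) jd; have := nu_rem d j PD; rewrite R /=.
lia.
Qed.

Lemma numin_add_same (D : diagram) d (P : nat*nat) j : 0 < d -> P \notin D -> j < d ->
  nu D d j = numin D d -> ~~ Rj d j P -> numin (P |` D) d = numin D d.
Proof.
move=> d0 PD jd e R; apply/eqP; rewrite eqn_leq; apply/andP; split.
  have := numin_le (P |` D) jd; rewrite nu_add // (negbTE R) /=; lia.
apply: numin_ge => // i id; rewrite nu_add //.
have := numin_le D id; lia.
Qed.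

Lemma numin_add_change (D : diagram) d (P : nat*nat) : 0 < d -> P \notin D ->
  (forall j, j < d -> nu D d j = numin D d -> Rj d j P) ->
  numin (P |` D) d <> numin D d.
Proof.
move=> d0 PD H.
suff : (numin D d).+1 <= numin (P |` D) d by lia.
apply: numin_ge => // j jd; rewrite nu_add //.
have := H j jd; have := numin_le D jd.
case: (Rj d j P) => /=; first by lia.
move=> le h; case: (nu D d j =P numin D d) => [/h //|ne]; lia.
Qed.

Lemma ferrers_rem (D : diagram) x y : ferrers D -> (x.+1, y) \notin D -> (x, y.+1) \notin D ->
  ferrers (D `\ (x, y)).
Proof.
move=> FD h1 h2 u v; rewrite in_fsetD1 => /andP [ne uvD].
have [u0 v0 H] := FD u v uvD; split => // i j hi hj.
rewrite in_fsetD1 H // andbT; apply/eqP => [[ei ej]]; subst i j.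
case: (ltngtP x u) => [xu|ux|exu].
- by move: h1; rewrite H //; lia.
- by move: hi; lia.
case: (ltngtP y v) => [yv|vy|eyv].
- by move: h2; rewrite H //; lia.
- by move: hj; lia.
by move: ne; rewrite exu eyv eqxx.
Qed.

Lemma ferrers_add (D : diagram) x y : ferrers D -> 0 < x -> 0 < y ->
  (1 < x -> (x.-1, y) \in D) -> (1 < y -> (x, y.-1) \in D) ->
  ferrers ((x, y) |` D).
Proof.
move=> FD x0 y0 hx hy u v; rewrite in_fset1U => /orP [/eqP [-> ->]|uvD].
  split => // i j hi hj; rewrite in_fset1U.
  case: (ltngtP i x) => [ix|xi|eix].
  - have x1 : 1 < x by lia.
    have [_ _ H] := FD _ _ (hx x1).
    by rewrite H ?orbT //; lia.
  - by lia.
  case: (ltngtP j y) => [jy|yj|ejy].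
  - have y1 : 1 < y by lia.
    have [_ _ H] := FD _ _ (hy y1).
    by rewrite H ?orbT //; lia.
  - by lia.
  by rewrite eix ejy eqxx.
have [u0 v0 H] := FD u v uvD; split => // i j hi hj.
by rewrite in_fset1U H ?orbT.
Qed.

Definition Rl (D : diagram) x := \max_(p <- enum_fset D | p.1 == x) p.2.
Definition Hl (D : diagram) y := \max_(p <- enum_fset D | p.2 == y) p.1.

Lemma Rl_attained (D : diagram) x : Rl D x = 0 \/ (x, Rl D x) \in D.
Proof.
rewrite /Rl big_seq_cond.
apply: (big_rec (fun v => v = 0 \/ (x, v) \in D)); first by left.
move=> [u v] w /andP [uD /eqP /= ux] [->|h] /=; subst u.
  by right; rewrite maxn0.
by right; rewrite /maxn; case: ifP.
Qed.

Lemma Hl_attained (D : diagram) y : Hl D y = 0 \/ (Hl D y, y) \in D.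
Proof.
rewrite /Hl big_seq_cond.
apply: (big_rec (fun v => v = 0 \/ (v, y) \in D)); first by left.
move=> [u v] w /andP [uD /eqP /= uy] [->|h] /=; subst v.
  by right; rewrite maxn0.
by right; rewrite /maxn; case: ifP.
Qed.

Lemma row_mem (D : diagram) x y : ferrers D -> 0 < x ->
  ((x, y) \in D) = (0 < y <= Rl D x).
Proof.
move=> FD x0; apply/idP/idP.
  move=> h; have [_ y0 _] := FD _ _ h; rewrite y0 /=.
  exact: (@leq_bigmax_seq _ (enum_fset D) (fun p : nat*nat => p.1 == x) (fun p => p.2) (x, y)).
move=> /andP [y0 yR]; case: (Rl_attained D x) => [e|h]; first by move: yR; rewrite e; lia.
have [_ _ H] := FD _ _ h; apply: H; lia.
Qed.

Lemma col_mem (D : diagram) x y : ferrers D -> 0 < y ->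
  ((x, y) \in D) = (0 < x <= Hl D y).
Proof.
move=> FD y0; apply/idP/idP.
  move=> h; have [x0 _ _] := FD _ _ h; rewrite x0 /=.
  exact: (@leq_bigmax_seq _ (enum_fset D) (fun p : nat*nat => p.2 == y) (fun p => p.1) (x, y)).
move=> /andP [x0 xH]; case: (Hl_attained D y) => [e|h]; first by move: xH; rewrite e; lia.
have [_ _ H] := FD _ _ h; apply: H; lia.
Qed.

Lemma count_row (D : diagram) x t : ferrers D -> 0 < x ->
  count (fun p : nat*nat => (p.1 == x) && (t < p.2)) (enum_fset D) = Rl D x - t.
Proof.
move=> FD x0.
rewrite (@count_uniq_eq D _ [seq (x, y) | y <- iota t.+1 (Rl D x - t)]); first by rewrite size_map size_iota.
  by rewrite map_inj_uniq ?iota_uniq // => a b [].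
move=> [u v] /=; case: (u =P x) => [->|ne]; last first.
  by rewrite andbF; apply/esym/mapP => -[w _ [e _]].
rewrite andTb (mem_map (fun a b (e : (x, a) = (x, b)) => f_equal snd e)) mem_iota row_mem //.
apply/idP/idP => /andP []; lia.
Qed.

Lemma count_col (D : diagram) y t : ferrers D -> 0 < y ->
  count (fun p : nat*nat => (p.2 == y) && (t < p.1)) (enum_fset D) = Hl D y - t.
Proof.
move=> FD y0.
rewrite (@count_uniq_eq D _ [seq (x, y) | x <- iota t.+1 (Hl D y - t)]); first by rewrite size_map size_iota.
  by rewrite map_inj_uniq ?iota_uniq // => a b [].
move=> [u v] /=; case: (v =P y) => [->|ne]; last first.
  by rewrite andbF; apply/esym/mapP => -[w _ [_ e]].
rewrite andTb (mem_map (fun a b (e : (a, y) = (b, y)) => f_equal fst e)) mem_iota col_mem //.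
apply/idP/idP => /andP []; lia.
Qed.

Lemma Rl_mono (D : diagram) x : ferrers D -> 0 < x -> Rl D x.+1 <= Rl D x.
Proof.
move=> FD x0; case: (Rl_attained D x.+1) => [->//|h].
have [_ r0 H] := FD _ _ h.
have : (x, Rl D x.+1) \in D by apply: H; lia.
by rewrite row_mem // => /andP [].
Qed.

Lemma Hl_mono (D : diagram) y : ferrers D -> 0 < y -> Hl D y.+1 <= Hl D y.
Proof.
move=> FD y0; case: (Hl_attained D y.+1) => [->//|h].
have [r0 _ H] := FD _ _ h.
have : (Hl D y.+1, y) \in D by apply: H; lia.
by rewrite col_mem // => /andP [].
Qed.

Ltac boolcase := repeat match goal with
  | |- context [?a <= ?b] => case: (leqP a b) => ?
  | |- context [?a == ?b :> nat] => case: (@eqP _ a b) => ?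
  end; rewrite /= ?andbT ?andbF /=; lia.

Lemma delta (D : diagram) k j : ferrers D -> j < k ->
  (nu D k.+1 j.+1 + (Hl D j.+1 - (k - j)) = nu D k.+1 j + (Rl D (k - j) - j.+1))%N.
Proof.
move=> FD jk.
rewrite -count_col // -count_row ?subn_gt0 // !nuE.
apply: count_addP => -[x y]; rewrite /Rj /=.
boolcase.
Qed.

Lemma irr_no_add (D : diagram) d (P : nat*nat) : irreducible D d -> 0 < d -> P \notin D ->
  ferrers (P |` D) -> (forall j, j < d -> nu D d j = numin D d -> Rj d j P) -> False.
Proof.
move=> irr d0 PD FD' H; apply: irr; exists (P |` D); split => //; right.
exists P; split; first by rewrite in_fset1U eqxx.
  by rewrite fsetU1K.
by move/esym; apply: numin_add_change.
Qed.

Lemma irr_no_rem (D : diagram) d (P : nat*nat) : irreducible D d -> 0 < d -> P \in D ->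
  ferrers (D `\ P) -> (forall j, j < d -> nu D d j = numin D d -> ~~ Rj d j P) -> False.
Proof.
move=> irr d0 PD FD' H; apply: irr; exists (D `\ P); split => //; left.
exists P; split => //; exact: numin_rem_same.
Qed.

Lemma Rl_big (D : diagram) k x : ferrers D -> (k, k) \in D -> 0 < x <= k -> k <= Rl D x.
Proof.
move=> FD kk hx; have [_ _ H] := FD _ _ kk.
have : (x, k) \in D by apply: H; lia.
by rewrite row_mem; [case/andP| |lia].
Qed.

Lemma Hl_big (D : diagram) k y : ferrers D -> (k, k) \in D -> 0 < y <= k -> k <= Hl D y.
Proof.
move=> FD kk hy; have [_ _ H] := FD _ _ kk.
have : (k, y) \in D by apply: H; lia.
by rewrite col_mem; [case/andP| |lia].
Qed.

Lemma flat_contra (D : diagram) k j : ferrers D -> (k, k) \in D -> 0 < j < k ->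
  Rl D (k - j).+1 = Rl D (k - j) -> Hl D j.+1 = Hl D j ->
  nu D k.+1 j = numin D k.+1 -> False.
Proof.
move=> FD kk /andP [j0 jk] eR eH e.
have d1 := delta FD jk.
have d2 : (nu D k.+1 j + (Hl D j - (k - j.-1)) = nu D k.+1 j.-1 + (Rl D (k - j.-1) - j))%N.
  by have := delta FD (j := j.-1) (k := k); rewrite prednK //; apply; lia.
rewrite (_ : k - j.-1 = (k - j).+1) in d2; last by lia.
have h1' : j.+1 < k.+1 by lia.
have h2 := numin_le D h1'.
have h3' : j.-1 < k.+1 by lia.
have h3 := numin_le D h3'.
have r1 : k <= Rl D (k - j) by apply: Rl_big => //; lia.
have r2 : k <= Rl D (k - j).+1 by apply: Rl_big => //; lia.
have c1 : k <= Hl D j by apply: Hl_big => //; lia.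
have c2 : k <= Hl D j.+1 by apply: Hl_big => //; lia.
lia.
Qed.

Local Close Scope fset_scope.

Lemma irr_cond2 n (D : diagram) k : 0 < k -> ferrers D -> of_order n D -> (k, k) \in D ->
  irreducible D k.+1 -> cond2 n D k.+1.
Proof.
move=> k0 FD OD kk irr.
have d0 : 0 < k.+1 by [].
set a := Hl D k; set b := Rl D k.
have ak : k <= a by apply: Hl_big => //; lia.
have bk : k <= b by apply: Rl_big => //; lia.
have aD : (a, k) \in D by rewrite col_mem //; lia.
have bD : (k, b) \in D by rewrite row_mem //; lia.
have rect : forall i j, k + i <= a -> k + j <= b -> (k + i, k + j) \in D.
  elim=> [|i IHi] j hi hj.
    by rewrite addn0 row_mem //; lia.
  elim: j hj => [|j IHj] hj.
    by rewrite addn0 col_mem //; lia.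
  case: (boolP ((k + i.+1, k + j.+1) \in D)) => // nD; exfalso.
  apply: (irr_no_add irr d0 nD).
    apply: ferrers_add => //; try lia.
      by move=> _; rewrite addnS /=; apply: IHi; lia.
    by move=> _; rewrite (addnS k j) /=; apply: IHj; lia.
  by move=> j' j'k _; rewrite /Rj /=; lia.
have SF : standard_form n D k.+1 a b.
  split => // x y /=; rewrite /inB /=; apply/idP/idP.
    case/and3P => xyD /andP [kx xn] /andP [ky yn].
    have [x0 y0 H] := FD _ _ xyD.
    have h1 : (x, k) \in D by apply: H; lia.
    have h2 : (k, y) \in D by apply: H; lia.
    have h1' : x <= a by move: h1; rewrite col_mem // => /andP [].
    have h2' : y <= b by move: h2; rewrite row_mem // => /andP [].
    by rewrite kx ky h1' h2'.
  case/andP => /andP [kx xa] /andP [ky yb].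
  have /andP [an _] := OD _ _ aD; have /andP [_ bn] := OD _ _ bD.
  have -> : x = k + (x - k) by lia.
  have -> : y = k + (y - k) by lia.
  rewrite rect; try lia.
have exJ : exists j, (j <= k) && (nu D k.+1 j == numin D k.+1).
  have [j jd e] := numin_ex D d0; exists j; rewrite e eqxx andbT; lia.
have nuk : nu D k.+1 k = numin D k.+1.
  have bnd : forall j, (j <= k) && (nu D k.+1 j == numin D k.+1) -> j <= k.
    by move=> j /andP [].
  case: (ex_maxnP exJ bnd) => p /andP [pk /eqP pe] pmax.
  case: (ltngtP p k) => [pk'|kp|e]; [|lia|by move: pe; rewrite e]; exfalso.
  have Jle : forall j, j < k.+1 -> nu D k.+1 j = numin D k.+1 -> j <= p.
    by move=> j jd e; apply: pmax; rewrite e eqxx andbT; lia.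
  have H1 : k <= Hl D 1 by apply: Hl_big => //; lia.
  case: (posnP p) => [p0|p0].
    apply: (irr_no_add (P := ((Hl D 1).+1, 1)) irr d0).
    - by rewrite col_mem //; lia.
    - apply: ferrers_add => //.
      by move=> _ /=; rewrite col_mem //; lia.
    - move=> j jd e; have := Jle j jd e; rewrite /Rj /=; lia.
  set x0 := k - p.
  have x00 : 0 < x0 by rewrite /x0; lia.
  have Rx0 : k <= Rl D x0 by apply: Rl_big => //; rewrite /x0; lia.
  have := Rl_mono FD x00; rewrite leq_eqVlt => /orP [/eqP eR|lR].
    have := Hl_mono FD p0; rewrite leq_eqVlt => /orP [/eqP eH|lH].
      by apply: (flat_contra FD kk _ eR eH pe); lia.
    have Hp : k <= Hl D p.+1 by apply: Hl_big => //; lia.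
    apply: (irr_no_add (P := ((Hl D p.+1).+1, p.+1)) irr d0).
    - by rewrite col_mem //; lia.
    - apply: ferrers_add => //.
        by move=> _ /=; rewrite col_mem //; lia.
      by move=> _ /=; rewrite col_mem //; lia.
    - move=> j jd e; have := Jle j jd e; rewrite /Rj /=; lia.
  apply: (irr_no_rem (P := (x0, Rl D x0)) irr d0).
  - by rewrite row_mem //; lia.
  - apply: ferrers_rem => //.
      by rewrite row_mem //; lia.
    by rewrite row_mem //; lia.
  - move=> j jd e; have := Jle j jd e; rewrite /Rj /x0 /=; lia.
have nu0 : nu D k.+1 0 = numin D k.+1.
  case: (ex_minnP exJ) => q /andP [qk /eqP qe] qmin.
  case: (posnP q) => [q0|q0]; first by rewrite -q0.
  exfalso.
  have Jge : forall j, j < k.+1 -> nu D k.+1 j = numin D k.+1 -> q <= j.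
    by move=> j jd e; apply: qmin; rewrite e eqxx andbT; lia.
  have R1 : k <= Rl D 1 by apply: Rl_big => //; lia.
  case: (ltngtP q k) => [qk'|kq|qk']; [|lia|]; last first.
    apply: (irr_no_add (P := (1, (Rl D 1).+1)) irr d0).
    - by rewrite row_mem //; lia.
    - apply: ferrers_add => //.
      by move=> _ /=; rewrite row_mem //; lia.
    - move=> j jd e; have := Jge j jd e; rewrite /Rj /=; lia.
  have Hq : k <= Hl D q by apply: Hl_big => //; lia.
  have := Hl_mono FD q0; rewrite leq_eqVlt => /orP [/eqP eH|lH]; last first.
    apply: (irr_no_rem (P := (Hl D q, q)) irr d0).
    - by rewrite col_mem //; lia.
    - apply: ferrers_rem => //.
        by rewrite col_mem //; lia.
      by rewrite col_mem //; lia.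
    - move=> j jd e; have := Jge j jd e; rewrite /Rj /=; lia.
  have x00 : 0 < k - q by lia.
  have := Rl_mono FD x00; rewrite leq_eqVlt => /orP [/eqP eR|lR].
    by apply: (flat_contra FD kk _ eR eH qe); lia.
  have Rq : k <= Rl D (k - q).+1 by apply: Rl_big => //; lia.
  apply: (irr_no_add (P := ((k - q).+1, (Rl D (k - q).+1).+1)) irr d0).
  - by rewrite row_mem //; lia.
  - apply: ferrers_add => //.
      by move=> _ /=; rewrite row_mem //; lia.
    by move=> _ /=; rewrite row_mem //; lia.
  - move=> j jd e; have := Jge j jd e; rewrite /Rj /=; lia.
exists a, b; split => //.
- by rewrite nu0 nuk.
- by move=> j hj; rewrite nu0; apply: numin_le; lia.
case=> ea eb.
case: (boolP (has (fun j => nu D k.+1 j == nu D k.+1 0) (iota 1 k.-1))).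
  case/hasP => j; rewrite mem_iota => hj /eqP e; exists j; split => //; lia.
move/hasPn => H; exfalso.
apply: (irr_no_rem (P := (k, k)) irr d0) => //.
  apply: ferrers_rem => //.
    by rewrite col_mem -/a ?ea //; lia.
  by rewrite row_mem -/b ?eb //; lia.
move=> j jd e; rewrite /Rj /=.
apply/negP => /andP [h1 h2].
have : j \in iota 1 k.-1 by rewrite mem_iota; lia.
by move/H; rewrite e nu0 eqxx.
Qed.

Lemma std_in n (D : diagram) k a b x y : standard_form n D k.+1 a b ->
  k <= x <= a -> k <= y <= b -> (x, y) \in D.
Proof.
case=> _ _ H hx hy; have := H x y; rewrite /= hx hy /=.
by move/andP => [].
Qed.

Lemma std_out n (D : diagram) k a b x y : standard_form n D k.+1 a b -> of_order n D ->
  (x, y) \in D -> k <= x -> k <= y -> (x <= a) && (y <= b).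
Proof.
case=> _ _ H OD xyD kx ky; have := H x y; rewrite /= xyD /inB /= kx ky.
have /andP [-> ->] := OD _ _ xyD; rewrite /=.
by move=> <-.
Qed.

Lemma cond2_irr n (D : diagram) k : 0 < k -> ferrers D -> of_order n D ->
  cond2 n D k.+1 -> irreducible D k.+1.
Proof.
move=> k0 FD OD [a [b [SF e0k ge ex]]].
have d0 : 0 < k.+1 by [].
have [ak bk _] := SF.
rewrite /= in e0k ex ak bk.
have kk : (k, k) \in D by apply: (std_in SF); lia.
have m0 : numin D k.+1 = nu D k.+1 0.
  apply/eqP; rewrite eqn_leq numin_le //=.
  apply: numin_ge => // j jd.
  case: (posnP j) => [->//|j0].
  case: (ltngtP j k) => [jk|kj|->]; [apply: ge; lia|lia|by rewrite e0k].
move=> [D' [FD' [[P [PD eD' em]] | [P [PD' eD em]]]]].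
- case: P PD eD' em => x y PD eD' em.
  have [x0 y0 HP] := FD _ _ PD.
  have nx : (x.+1, y) \notin D.
    apply/negP => h; have : (x.+1, y) \in D' by rewrite eD' in_fsetD1 h andbT; apply/eqP => -[]; lia.
    move/FD' => [_ _ H]; have : (x, y) \in D' by apply: H; lia.
    by rewrite eD' in_fsetD1 eqxx.
  have ny : (x, y.+1) \notin D.
    apply/negP => h; have : (x, y.+1) \in D' by rewrite eD' in_fsetD1 h andbT; apply/eqP => -[]; lia.
    move/FD' => [_ _ H]; have : (x, y) \in D' by apply: H; lia.
    by rewrite eD' in_fsetD1 eqxx.
  move: em; rewrite eD'.
  case: (ltnP k x) => kx.
    have R : Rj k.+1 0 (x, y) by rewrite /Rj /=; lia.
    by apply: (numin_rem_drop PD (ltn0Sn k) _ R); rewrite m0.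
  case: (ltnP k y) => ky.
    have R : Rj k.+1 k (x, y) by rewrite /Rj /=; lia.
    by apply: (numin_rem_drop PD (ltnSn k) _ R); rewrite m0 e0k.
  have [_ _ Hk] := FD _ _ kk.
  have ex' : x = k.
    case: (ltngtP x k) => // xk; move: nx; rewrite Hk //; lia.
  have ey : y = k.
    case: (ltngtP y k) => // yk; move: ny; rewrite Hk //; lia.
  subst x y.
  have ea : a = k.
    case: (ltngtP a k) => // ka; [lia|].
    by move: nx; rewrite (std_in SF); lia.
  have eb : b = k.
    case: (ltngtP b k) => // kb; [lia|].
    by move: ny; rewrite (std_in SF); lia.
  have [j [hj e]] := ex (conj ea eb).
  have R : Rj k.+1 j (k, k) by rewrite /Rj /=; lia.
  have jd : j < k.+1 by lia.
  by apply: (numin_rem_drop PD jd _ R); rewrite m0 e.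
- have PD : P \notin D by rewrite eD fsetD11.
  have eD' : D' = (P |` D)%fset by rewrite eD fsetD1K.
  apply: em; rewrite eD'; apply/esym.
  case: P PD PD' eD eD' => x y PD PD' eD eD'.
  have [x0 y0 HP] := FD' _ _ PD'.
  case: (leqP x k) => kx.
    have R : ~~ Rj k.+1 0 (x, y) by rewrite /Rj /=; apply/negP => /andP []; lia.
    by apply: (numin_add_same d0 PD (ltn0Sn k) _ R); rewrite m0.
  case: (leqP y k) => ky.
    have R : ~~ Rj k.+1 k (x, y) by rewrite /Rj /=; apply/negP => /andP []; lia.
    by apply: (numin_add_same d0 PD (ltnSn k) _ R); rewrite m0 e0k.
  exfalso; move/negP: PD; apply.
  have h1 : (x.-1, y) \in D.
    rewrite eD in_fsetD1 HP; [|lia|lia]; rewrite andbT; apply/eqP => -[]; lia.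
  have h2 : (x, y.-1) \in D.
    rewrite eD in_fsetD1 HP; [|lia|lia]; rewrite andbT; apply/eqP => -[]; lia.
  have := std_out SF OD h1; have := std_out SF OD h2.
  move=> s2 s1; apply: (std_in SF).
    by have := s1 ltac:(lia) ltac:(lia); lia.
  by have := s2 ltac:(lia) ltac:(lia); lia.
Qed.

Import GRing.Theory Num.Theory.
From mathcomp Require Import ring.

Lemma ineq3_step (D : diagram) k a b j : j < k ->
  ineq3 D k.+1 a b j.+1 = (ineq3 D k.+1 a b j + (b%:Z - a%:Z + k%:Z - 2 * j%:Z - 1)
     + (cX D k.+1 b (k - j))%:Z - (cY D k.+1 a j.+1)%:Z)%R.
Proof.
move=> jk; rewrite /ineq3 !(big_nat_recr j.+1 1) //= subSS !intS.
ring.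
Qed.

Lemma ineq3_0 (D : diagram) d a b : ineq3 D d a b 0 = 0%R.
Proof. by rewrite /ineq3 !big_geq // mul0r. Qed.

Lemma ineq3_k (D : diagram) k a b : 0 < k ->
  ineq3 D k.+1 a b k = (k%:Z * (b%:Z - a%:Z) + \sum_(1 <= i < k) (cX D k.+1 b i)%:Z
                        - \sum_(1 <= i < k) (cY D k.+1 a i)%:Z)%R.
Proof.
move=> k0; rewrite /ineq3.
have -> : (\sum_(1 <= i < k.+1) (cX D k.+1 b (k.+1 - i))%:Z =
           \sum_(1 <= i < k.+1) (cX D k.+1 b i)%:Z)%R.
  rewrite big_nat_rev; apply: eq_big_nat => i hi; congr (Posz (cX _ _ _ _)); lia.
rewrite !(big_nat_recr k 1) //=.
have -> : cX D k.+1 b k = 0 by rewrite /cX /= eqxx.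
have -> : cY D k.+1 a k = 0 by rewrite /cY /= eqxx.
rewrite intS; ring.
Qed.

Lemma rowX n (D : diagram) k a b x : 0 < k -> ferrers D -> of_order n D ->
  standard_form n D k.+1 a b -> 0 < x <= k -> Rl D x = (b + cX D k.+1 b x)%N.
Proof.
move=> k0 FD OD SF hx; have [ak bk _] := SF; rewrite /= in ak bk.
have kb : (k, b) \in D by apply: (std_in SF); lia.
rewrite /cX /=; case: (x =P k) => [->|xk].
  rewrite addn0; apply/eqP; rewrite eqn_leq.
  have := kb; rewrite row_mem // => /andP [_ ->]; rewrite andbT.
  case: (Rl_attained D k) => [->//|h].
  have := std_out SF OD h (leqnn k); rewrite andbC => /(_ _) /andP[] //.
  by move: kb; rewrite row_mem //; lia.
rewrite card_sep count_row //; last by lia.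
have [_ _ H] := FD _ _ kb.
have : (x, b) \in D by apply: H; lia.
have x0 : 0 < x by lia.
by rewrite row_mem // => /andP [_ h]; lia.
Qed.

Lemma colY n (D : diagram) k a b y : 0 < k -> ferrers D -> of_order n D ->
  standard_form n D k.+1 a b -> 0 < y <= k -> Hl D y = (a + cY D k.+1 a y)%N.
Proof.
move=> k0 FD OD SF hy; have [ak bk _] := SF; rewrite /= in ak bk.
have ka : (a, k) \in D by apply: (std_in SF); lia.
rewrite /cY /=; case: (y =P k) => [->|yk].
  rewrite addn0; apply/eqP; rewrite eqn_leq.
  have := ka; rewrite col_mem // => /andP [_ ->]; rewrite andbT.
  case: (Hl_attained D k) => [->//|h].
  have := std_out SF OD h _ (leqnn k); move=> /(_ _) /andP[] //.
  by move: ka; rewrite col_mem //; lia.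
rewrite card_sep count_col //; last by lia.
have [_ _ H] := FD _ _ ka.
have : (a, y) \in D by apply: H; lia.
have y0 : 0 < y by lia.
by rewrite col_mem // => /andP [_ h]; lia.
Qed.

Lemma nu_ineq3 n (D : diagram) k a b j : 0 < k -> ferrers D -> of_order n D ->
  standard_form n D k.+1 a b -> j <= k ->
  ((nu D k.+1 j)%:Z = (nu D k.+1 0)%:Z + ineq3 D k.+1 a b j)%R.
Proof.
move=> k0 FD OD SF; have [ak bk _] := SF; rewrite /= in ak bk.
elim: j => [|j IH] hj; first by rewrite ineq3_0 addr0.
have jk : j < k by lia.
have := delta FD jk.
rewrite (colY (y := j.+1) k0 FD OD SF) ?(rowX (x := k - j) k0 FD OD SF); try lia.
rewrite ineq3_step //.
move: (IH (ltnW hj)).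
set I := ineq3 _ _ _ _ _; set X := cX _ _ _ _; set Y := cY _ _ _ _.
lia.
Qed.

Lemma cond23 n (D : diagram) k : 0 < k -> ferrers D -> of_order n D ->
  (cond2 n D k.+1 <-> cond3 n D k.+1).
Proof.
move=> k0 FD OD; split => -[a [b [SF h1 h2 h3]]]; exists a, b; split => //=.
- have := nu_ineq3 k0 FD OD SF (leqnn k).
  rewrite ineq3_k // -h1 mulrC.
  move: ((b%:Z - a%:Z) * k%:Z)%R => T.
  move: (\sum_(1 <= i < k) (cX D k.+1 b i)%:Z)%R => SX.
  move: (\sum_(1 <= i < k) (cY D k.+1 a i)%:Z)%R => SY.
  lia.
- move=> j hj; have := h2 j hj; have := nu_ineq3 k0 FD OD SF (j := j) ltac:(lia).
  set I := ineq3 _ _ _ _ _; lia.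
- move=> hab; have [j [hj e]] := h3 hab; exists j; split => //.
  have := nu_ineq3 k0 FD OD SF (j := j) ltac:(lia).
  set I := ineq3 _ _ _ _ _; lia.
- have := nu_ineq3 k0 FD OD SF (leqnn k).
  rewrite ineq3_k //.
  move: h1; rewrite /= mulrC.
  move: ((b%:Z - a%:Z) * k%:Z)%R => T.
  move: (\sum_(1 <= i < k) (cX D k.+1 b i)%:Z)%R => SX.
  move: (\sum_(1 <= i < k) (cY D k.+1 a i)%:Z)%R => SY.
  lia.
- move=> j hj; have := h2 j hj; have := nu_ineq3 k0 FD OD SF (j := j) ltac:(lia).
  set I := ineq3 _ _ _ _ _; lia.
- move=> hab; have [j [hj e]] := h3 hab; exists j; split => //.
  have := nu_ineq3 k0 FD OD SF (j := j) ltac:(lia).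
  set I := ineq3 _ _ _ _ _; lia.
Qed.

Lemma d1_irr (D : diagram) : ferrers D -> ~ irreducible D 1.
Proof.
move=> FD irr.
apply: (irr_no_add (P := ((Hl D 1).+1, 1)) irr) => //.
- by rewrite col_mem //; lia.
- apply: ferrers_add => //.
  by move=> h /=; rewrite col_mem //; lia.
- move=> j; rewrite ltnS leqn0 => /eqP -> _; rewrite /Rj /=; lia.
Qed.

Lemma d1_std n (D : diagram) a b : ferrers D -> ~ standard_form n D 1 a b.
Proof.
move=> FD [_ _ H]; have := H 0 0; rewrite /= !leq0n /=.
by case: (boolP ((0, 0) \in D)) => // /FD [].
Qed.

Theorem theorem4p10 (d n : nat) (D : diagram) :
  0 < d -> 0 < n -> ferrers D -> of_order n D ->
  (exists x y, ((x, y) \in D) && inB n d x y) ->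
  (irreducible D d <-> cond2 n D d) /\ (irreducible D d <-> cond3 n D d).
Proof.
case: d => [//|k] _ _ FD OD [x [y /andP [xyD hB]]].
case: (posnP k) => [k0|k0].
  subst k.
  have h1 := d1_irr FD.
  have h2 : ~ cond2 n D 1 by move=> [a [b [SF _ _ _]]]; exact: (d1_std FD SF).
  have h3 : ~ cond3 n D 1 by move=> [a [b [SF _ _ _]]]; exact: (d1_std FD SF).
  tauto.
have kk : (k, k) \in D.
  have [_ _ H] := FD _ _ xyD; move: hB; rewrite /inB /= => /andP [/andP [kx _] /andP [ky _]].
  by apply: H; lia.
have e12 : irreducible D k.+1 <-> cond2 n D k.+1.
  by split; [exact: irr_cond2 | exact: cond2_irr].
have := cond23 k0 FD OD.
tauto.
Qed.
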